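(* Let $R$ be a schematic semi-graded ring and $J$ a compatible semi-graded ideal of $R$. Then $R/J$ is a schematic semi-graded ring.
   Context: Rings are associative with $1$; modules are left modules. A ring $R$ is semi-graded (SG) if there are additive subgroups $R_n$ ($n\in\mathbb{Z}$) with $R=\bigoplus_n R_n$, $R_mR_n\subseteq\bigoplus_{k\le m+n}R_k$, and $1\in R_0$; positively SG if $R_n=0$ for $n<0$. A submodule $N$ of an SG module $M=\bigoplus M_n$ is an SG submodule if $N=\bigoplus_n(N\cap M_n)$. An SG ideal is a two-sided ideal $J$ that is an SG submodule of $R$; then $R/J$ is SG with $(R/J)_n=(R_n+J)/J$. Let $R'_n=\{r\in R_n: rh\in R_{n+m}\ \forall m,\forall h\in R_m\}$, $R''_n=\{r\in R'_n: hr\in R_{n+m}\ \forall m,\forall h\in R_m\}$, $R'=\bigcup R'_n$, $R''=\bigcup R''_n$ (and similarly $(R/J)'$ for $R/J$). $J$ is compatible if the image of $R'$ in $R/J$ equals $(R/J)'$. A left Ore set $S$ is good if $S\subseteq R''$ and for $s\in S$, $r\in R'$ there are $u\in R'$, $v\in S$ with $us=vr$. For positively SG $R$, $R_{\ge t}$ is the intersection of all SG ideals containing $\bigoplus_{k\ge t}R_k$. $R$ is schematic if it is positively SG, left Noetherian, and there is a finite set $I$ of good left Ore sets $S$ with $S\cap\bigoplus_{k\ge1}R_k\neq\emptyset$ such that for each $(x_S)_{S\in I}\in\prod_{S\in I}S$ there exist $t,m\in\mathbb{N}$ with $(R_{\ge t})^m\subseteq\sum_{S\in I}Rx_S$. 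*)

(* Defs.v *)
From HB Require Import structures.
From mathcomp Require Import all_boot all_order all_algebra.
Set Implicit Arguments. Unset Strict Implicit. Unset Printing Implicit Defensive.
Import Order.TTheory GRing.Theory Num.Theory.
Local Open Scope ring_scope.

Section SG.
Variable R : pzRingType.

Definition grading := int -> R -> Prop.

Definition addsub (P : R -> Prop) : Prop :=
  P 0 /\ forall x y, P x -> P y -> P (x - y).

Definition dsum (G : grading) (P : int -> Prop) (x : R) : Prop :=
  exists (s : seq int) (f : int -> R),
    (forall k, k \in s -> P k /\ G k (f k)) /\ x = \sum_(k <- s) f k.

Definition dsum_indep (G : grading) : Prop :=
  forall (s : seq int) (f : int -> R), uniq s ->
    (forall k, k \in s -> G k (f k)) -> \sum_(k <- s) f k = 0 ->
    forall k, k \in s -> f k = 0.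

Definition semi_graded (G : grading) : Prop :=
  [/\ forall n, addsub (G n),
      (forall x, dsum G (fun _ => True) x),
      dsum_indep G,
      (forall (m n : int) x y, G m x -> G n y -> dsum G (fun k => k <= m + n) (x * y))
    & G 0 1].

Definition pos_semi_graded (G : grading) : Prop :=
  semi_graded G /\ forall (n : int) x, n < 0 -> G n x -> x = 0.

Definition left_ideal (I : R -> Prop) : Prop :=
  addsub I /\ forall r x, I x -> I (r * x).

Definition two_sided_ideal (I : R -> Prop) : Prop :=
  left_ideal I /\ forall r x, I x -> I (x * r).

Definition SG_submodule (G : grading) (N : R -> Prop) : Prop :=
  forall x, N x -> exists (s : seq int) (f : int -> R),
    (forall k, k \in s -> G k (f k) /\ N (f k)) /\ x = \sum_(k <- s) f k.

Definition SG_ideal (G : grading) (J : R -> Prop) : Prop :=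
  two_sided_ideal J /\ SG_submodule G J.

Definition primeN (G : grading) (n : int) (r : R) : Prop :=
  G n r /\ forall (m : int) h, G m h -> G (n + m) (r * h).
Definition prime2N (G : grading) (n : int) (r : R) : Prop :=
  primeN G n r /\ forall (m : int) h, G m h -> G (n + m) (h * r).
Definition primeR (G : grading) (r : R) : Prop := exists n, primeN G n r.
Definition prime2R (G : grading) (r : R) : Prop := exists n, prime2N G n r.

Definition left_Ore (S : R -> Prop) : Prop :=
  [/\ S 1, (forall s t, S s -> S t -> S (s * t))
    & forall s r, S s -> exists u v, S u /\ u * r = v * s].

Definition good_Ore (G : grading) (S : R -> Prop) : Prop :=
  [/\ left_Ore S, (forall s, S s -> prime2R G s)
    & forall s r, S s -> primeR G r ->
        exists u v, primeR G u /\ S v /\ u * s = v * r].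

Definition left_noetherian : Prop :=
  forall I : nat -> R -> Prop, (forall n, left_ideal (I n)) ->
    (forall n x, I n x -> I n.+1 x) ->
    exists N, forall n x, (N <= n)%N -> I n x -> I N x.

Definition Rge (G : grading) (t : nat) (x : R) : Prop :=
  forall J, SG_ideal G J -> (forall y, dsum G (fun k => (t%:Z <= k)) y -> J y) -> J x.

Definition ideal_pow (I : R -> Prop) (m : nat) (x : R) : Prop :=
  exists (k : nat) (a : 'I_k -> 'I_m -> R),
    (forall i j, I (a i j)) /\ x = \sum_(i < k) \prod_(j < m) a i j.

Definition schematic (G : grading) : Prop :=
  [/\ pos_semi_graded G, left_noetherian &
    exists (n : nat) (S : 'I_n -> R -> Prop),
      [/\ forall i, good_Ore G (S i),
          (forall i, exists x, S i x /\ dsum G (fun k => 1 <= k) x)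
        & forall x : 'I_n -> R, (forall i, S i (x i)) ->
            exists t m : nat, forall y, ideal_pow (Rge G t) m y ->
              exists r : 'I_n -> R, y = \sum_(i < n) r i * x i]].

End SG.

(* Quotient R/J presented by a surjective ring morphism pi : R -> Q with kernel J;
   its grading is (R/J)_n = pi(R_n). *)
Definition image_grading (R Q : pzRingType) (pi : R -> Q) (G : grading R) : grading Q :=
  fun n y => exists x, G n x /\ pi x = y.

Definition compatible (R Q : pzRingType) (pi : R -> Q) (G : grading R) : Prop :=
  forall y, primeR (image_grading pi G) y <-> exists x, primeR G x /\ pi x = y.

(* Main.v *)
Require Import Defs.
From HB Require Import structures.
From mathcomp Require Import all_boot all_order all_algebra.
From Stdlib Require Import ClassicalEpsilon.
Import GRing.Theory.
Set Implicit Arguments. Unset Strict Implicit.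
Local Open Scope ring_scope.

Lemma choice_fun (A B : Type) (P : A -> B -> Prop) :
  (forall a, exists b, P a b) -> exists f : A -> B, forall a, P a (f a).
Proof.
move=> H.
exists (fun a => proj1_sig (constructive_indefinite_description _ (H a))).
move=> a; exact: (proj2_sig (constructive_indefinite_description _ (H a))).
Qed.

Lemma addsub0 (R : pzRingType) (P : R -> Prop) : addsub P -> P 0.
Proof. by case. Qed.

Lemma addsubD (R : pzRingType) (P : R -> Prop) x y :
  addsub P -> P x -> P y -> P (x + y).
Proof.
move=> [P0 PB] Px Py.
have Pny : P (- y) by rewrite -sub0r; exact: PB.
by rewrite -(opprK y); exact: PB.
Qed.

Lemma addsub_sum (R : pzRingType) (P : R -> Prop) (I : eqType) (s : seq I)
  (C : pred I) (F : I -> R) :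
  addsub P -> (forall i, i \in s -> C i -> P (F i)) ->
  P (\sum_(i <- s | C i) F i).
Proof.
move=> hP hF; rewrite big_seq_cond; apply: big_ind.
- exact: addsub0.
- move=> x y; exact: addsubD.
- by move=> i /andP[]; exact: hF.
Qed.

Lemma regroup (R : pzRingType) (s u : seq int) (g : int -> R) :
  uniq u -> {subset s <= u} ->
  \sum_(k <- u) \sum_(l <- s | l == k) g l = \sum_(l <- s) g l.
Proof.
move=> uu su.
rewrite (eq_bigr (fun k => \sum_(l <- s) (if l == k then g l else 0)));
  last by move=> k _; rewrite big_mkcond.
rewrite exchange_big /=; apply: eq_big_seq => l ls.
rewrite -big_mkcond (big_rem l (su l ls)) /= eqxx big1_seq ?addr0 //.
move=> k /andP[lk]; by rewrite (eqP lk) mem_rem_uniqF.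
Qed.

Lemma comp (R : pzRingType) (G : grading R) (N : R -> Prop) (s : seq int)
  (f : int -> R) :
  semi_graded G -> addsub N -> SG_submodule G N -> uniq s ->
  (forall k, k \in s -> G k (f k)) -> N (\sum_(k <- s) f k) ->
  forall k, k \in s -> N (f k).
Proof.
move=> [hadd _ hind _ _] hN hsub us hf Nsum.
have [s' [g [hg eq]]] := hsub _ Nsum.
pose u := undup (s ++ s').
pose h k := (if k \in s then f k else 0) - \sum_(l <- s' | l == k) g l.
have uu : uniq u := undup_uniq _.
have Hh : forall k, k \in u -> G k (h k).
  move=> k _; rewrite /h; apply: (hadd k).2.
    by case: ifP => ks; [exact: hf | exact: (hadd k).1].
  apply: addsub_sum => // l ls' /eqP lk; rewrite -lk; exact: (hg l ls').1.
have Hsum : \sum_(k <- u) h k = 0.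
  rewrite /h sumrB (regroup g uu); last first.
    by move=> l ls'; rewrite mem_undup mem_cat ls' orbT.
  rewrite -big_mkcond -big_filter.
  have hp : perm_eq [seq k <- u | k \in s] s.
    apply: uniq_perm; [exact: filter_uniq | exact: us |].
    by move=> k; rewrite mem_filter mem_undup mem_cat; case: (k \in s).
  by rewrite (perm_big _ hp) -eq subrr.
move=> k ks.
have hk0 : h k = 0.
  by apply: (hind u h uu Hh Hsum k); rewrite mem_undup mem_cat ks.
move: hk0; rewrite /h ks => /eqP; rewrite subr_eq0 => /eqP ->.
apply: addsub_sum => // l ls' _; exact: (hg l ls').2.
Qed.

Lemma normalize (R : pzRingType) (G : grading R) (x : R) : semi_graded G ->
  exists (s : seq int) (f : int -> R), uniq s /\
    (forall k, k \in s -> G k (f k)) /\ x = \sum_(k <- s) f k.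
Proof.
move=> hG; case: (hG) => hadd hds _ _ _.
have [s [f [hf ->]]] := hds x.
exists (undup s), (fun k => \sum_(l <- s | l == k) f l).
split; first exact: undup_uniq.
split.
  move=> k _; apply: addsub_sum => // l ls /eqP <-; exact: (hf l ls).2.
by rewrite regroup ?undup_uniq // => l; rewrite mem_undup.
Qed.

Lemma Rge_addsub (R : pzRingType) (G : grading R) t : addsub (Rge G t).
Proof.
split.
  by move=> J [[[[J0 _] _] _] _] _.
move=> x y hx hy J hJ hc; case: (hJ) => [[[[_ JB] _] _] _].
apply: JB; [exact: hx | exact: hy].
Qed.

Lemma Rge_mull (R : pzRingType) (G : grading R) t r x :
  Rge G t x -> Rge G t (r * x).
Proof.
move=> hx J hJ hc; case: (hJ) => [[[_ JL] _] _]; apply: JL; exact: hx.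
Qed.

Lemma Rge_mulr (R : pzRingType) (G : grading R) t r x :
  Rge G t x -> Rge G t (x * r).
Proof.
move=> hx J hJ hc; case: (hJ) => [[_ JR] _]; apply: JR; exact: hx.
Qed.

Lemma image_lift (R Q : pzRingType) (pi : R -> Q) (G : grading R)
  (s : seq int) (f : int -> Q) :
  (forall k, k \in s -> image_grading pi G k (f k)) ->
  exists g : int -> R, forall k, k \in s -> G k (g k) /\ pi (g k) = f k.
Proof.
move=> H.
apply: (@choice_fun int R (fun k x => k \in s -> G k x /\ pi x = f k)).
move=> k; case: (boolP (k \in s)) => ks.
  have [x [Gx px]] := H k ks; by exists x.
by exists 0 => kin; case/negP: ks.
Qed.

Unset Implicit Arguments.
Theorem mainTheorem9 (R Q : pzRingType) (G : grading R) (J : R -> Prop)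
    (pi : {rmorphism R -> Q}) :
  schematic G -> SG_ideal G J ->
  (forall x, J x <-> pi x = 0) -> (forall y, exists x, pi x = y) ->
  compatible pi G ->
  schematic (image_grading pi G).
Proof.
move=> [[hsg hneg] hnoeth [n [S [hgood hpos1 hcov]]]] hJ hker hsurj hcomp.
have [[[Jadd _] _] Jsub] := hJ.
case: (hsg) => hadd hds hind hmul h01.
split.
- split.
  + split.
    * move=> k; split.
        by exists 0; split; [exact: (hadd k).1 | exact: rmorph0].
      move=> _ _ [a [Ga <-]] [b [Gb <-]]; exists (a - b).
      by split; [exact: (hadd k).2 | exact: rmorphB].
    * move=> y; have [x <-] := hsurj y; have [s [f [hf ->]]] := hds x.
      exists s, (fun k => pi (f k)); split; last exact: rmorph_sum.
      move=> k ks; split=> //; exists (f k); split=> //; exact: (hf k ks).2.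
    * move=> s f us hf hsum k ks.
      have [g hg] := image_lift hf.
      have Jsum : J (\sum_(l <- s) g l).
        apply/hker; rewrite rmorph_sum -[RHS]hsum; apply: eq_big_seq => l ls.
        exact: (hg l ls).2.
      have := comp hsg Jadd Jsub us (fun l ls => (hg l ls).1) Jsum ks.
      by move/hker; rewrite (hg k ks).2.
    * move=> m k _ _ [a [Ga <-]] [b [Gb <-]].
      have [s [f [hf e]]] := hmul m k a b Ga Gb.
      exists s, (fun l => pi (f l)); split; last by rewrite -rmorphM e rmorph_sum.
      move=> l ls; split; first exact: (hf l ls).1.
      exists (f l); split=> //; exact: (hf l ls).2.
    * by exists 1; split; [exact: h01 | exact: rmorph1].
  + move=> k _ klt [a [Ga <-]]; by rewrite (hneg k a klt Ga) rmorph0.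
- move=> I hI hinc.
  pose I' (k : nat) (x : R) := I k (pi x).
  have hI' : forall k, left_ideal (I' k).
    move=> k; split; first split.
    + by rewrite /I' rmorph0; exact: (hI k).1.1.
    + by move=> x y; rewrite /I' rmorphB; exact: (hI k).1.2.
    + by move=> r x; rewrite /I' rmorphM; exact: (hI k).2.
  have [N hN] := hnoeth I' hI' (fun k x => hinc k (pi x)).
  exists N => k y kN Iy; have [x ex] := hsurj y.
  rewrite -ex in Iy *; exact: (hN k x kN Iy).
- exists n, (fun i y => exists x, S i x /\ pi x = y); split.
  + move=> i; have [[S1 Smul Sore] S2 S3] := hgood i; split.
    * split.
      -- by exists 1; split; [exact: S1 | exact: rmorph1].
      -- move=> _ _ [a [Sa <-]] [b [Sb <-]]; exists (a * b).
         by split; [exact: Smul | exact: rmorphM].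
      -- move=> _ r [a [Sa <-]]; have [r' <-] := hsurj r.
         have [u [v [Su e]]] := Sore a r' Sa.
         exists (pi u), (pi v); split; first by exists u.
         by rewrite -!rmorphM e.
    * move=> _ [a [Sa <-]]; have [k [[Gk hr] hl]] := S2 a Sa.
      exists k; split; first split.
      -- by exists a.
      -- move=> m _ [h [Gh <-]]; exists (a * h).
         by split; [exact: hr | exact: rmorphM].
      -- move=> m _ [h [Gh <-]]; exists (h * a).
         by split; [exact: hl | exact: rmorphM].
    * move=> _ r [a [Sa <-]] hr.
      have [r' [pr' <-]] := (hcomp r).1 hr.
      have [u [v [pu [Sv e]]]] := S3 a r' Sa pr'.
      exists (pi u), (pi v); split.
        by apply/(hcomp _).2; exists u.
      by split; [exists v | rewrite -!rmorphM e].
  + move=> i; have [x [Sx [s [f [hf ex]]]]] := hpos1 i.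
    exists (pi x); split; first by exists x.
    exists s, (fun k => pi (f k)); split; last by rewrite ex rmorph_sum.
    move=> k ks; split; first exact: (hf k ks).1.
    exists (f k); split=> //; exact: (hf k ks).2.
  + move=> x hx.
    have [x' hx'] := @choice_fun _ _ (fun i a => S i a /\ pi a = x i) hx.
    have [t [m htm]] := hcov x' (fun i => (hx' i).1).
    exists t, m => y [k [a [ha ->]]].
    pose K := fun q => exists b, Rge G t b /\ pi b = q.
    have hKid : SG_ideal (image_grading pi G) K.
      split; first split; first split.
      * split.
          by exists 0; split; [exact: (Rge_addsub G t).1 | exact: rmorph0].
        move=> _ _ [a1 [Ra <-]] [b [Rb <-]]; exists (a1 - b).
        by split; [exact: (Rge_addsub G t).2 | exact: rmorphB].
      * move=> r _ [a1 [Ra <-]]; have [r' <-] := hsurj r; exists (r' * a1).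
        by split; [exact: Rge_mull | exact: rmorphM].
      * move=> r _ [a1 [Ra <-]]; have [r' <-] := hsurj r; exists (a1 * r').
        by split; [exact: Rge_mulr | exact: rmorphM].
      * move=> _ [z [Rz <-]].
        have [s [f [us [hf ez]]]] := normalize z hsg.
        exists s, (fun k => pi (f k)); split; last by rewrite ez rmorph_sum.
        move=> l ls; split; first by exists (f l); split=> //; exact: hf.
        exists (f l); split=> //.
        move=> J' hJ' hc; case: (hJ') => [[[J'add _] _] J'sub].
        apply: (comp hsg J'add J'sub us hf _ ls).
        by rewrite -ez; exact: Rz.
    have hKc : forall q, dsum (image_grading pi G) (fun l => t%:Z <= l) q -> K q.
      move=> _ [s [f [hf ->]]].
      have [g hg] := image_lift (fun l ls => (hf l ls).2).
      exists (\sum_(l <- s) g l); split.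
        move=> J' hJ' hc; apply: hc; exists s, g; split=> //.
        move=> l ls; split; [exact: (hf l ls).1 | exact: (hg l ls).1].
      rewrite rmorph_sum; apply: eq_big_seq => l ls; exact: (hg l ls).2.
    have hK : forall i j, exists b, Rge G t b /\ pi b = a i j.
      move=> i j; exact: (ha i j K hKid hKc).
    have hb1 : forall i, exists bi : 'I_m -> R,
        forall j, Rge G t (bi j) /\ pi (bi j) = a i j.
      move=> i; exact: choice_fun (hK i).
    have [b hb] := choice_fun hb1.
    have hpow : ideal_pow (Rge G t) m (\sum_(i < k) \prod_(j < m) b i j).
      by exists k, b; split=> // i j; exact: (hb i j).1.
    have [r hr] := htm _ hpow.
    exists (fun i => pi (r i)).
    have -> : \sum_(i < k) \prod_(j < m) a i j
              = pi (\sum_(i < k) \prod_(j < m) b i j).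
      rewrite rmorph_sum; apply: eq_bigr => i _; rewrite rmorph_prod.
      by apply: eq_bigr => j _; rewrite (hb i j).2.
    rewrite hr rmorph_sum; apply: eq_bigr => i _.
    by rewrite rmorphM (hx' i).2.
Qed.
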